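(* Let $\mathsf{L}_1,\mathsf{L}_2$ be finite connected undirected graphs (possibly with tails), where $\mathsf{L}_j$ has $t_j\in\{1,2\}$ marked (ramified) vertices. Let $1\le g\le \min(t_1,t_2)$ and let $\mathsf{L}$ be a $g$-gluing of $\mathsf{L}_1$ and $\mathsf{L}_2$, and assume that $\mathsf{L}$ has $t=t_1+t_2-g$ marked vertices with $1\le t\le 2$. Then $F_t(\mathsf{L})=F_{t_1}(\mathsf{L}_1)F_{t_2}(\mathsf{L}_2)$.
   Context: Denote the marked vertices of $\mathsf{L}_j$ by $v_i(\mathsf{L}_j)$, $1\le i\le t_j$. A $g$-gluing $\mathsf{L}$ of $\mathsf{L}_1$ and $\mathsf{L}_2$ is the graph with edge set $E(\mathsf{L}_1)\sqcup E(\mathsf{L}_2)$ and vertex set $\mathbf{V}(\mathsf{L}_1)\sqcup\mathbf{V}(\mathsf{L}_2)$ modulo the identification $v_1(\mathsf{L}_1)=v_1(\mathsf{L}_2)$ if $g=1$, and modulo $v_i(\mathsf{L}_1)=v_i(\mathsf{L}_2)$ for $i=1,2$ if $g=2$; the marked vertices of $\mathsf{L}$ are the images of the marked vertices of $\mathsf{L}_1,\mathsf{L}_2$. For a finite connected graph $\mathsf{S}$ with $t\in\{1,2\}$ marked vertices, a segmental $t$-tree spanning forest is a decomposition of $\mathsf{S}$ into $t$ trees (a spanning forest with $t$ components) each containing exactly one marked vertex; $F_t(\mathsf{S})$ denotes their number. In particular $F_1(\mathsf{S})$ is the number of spanning trees of $\mathsf{S}$. *)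

(* Defs.v *)
(* Finite multigraphs: vertex finType V, edge finType E,
   endpoint map ends : E -> V * V (loops and multiple edges allowed). *)
From mathcomp Require Import all_boot.
Set Implicit Arguments. Unset Strict Implicit. Unset Printing Implicit Defensive.

Section Graphs.
Variables (V E : finType) (ends : E -> V * V).

Definition adj_in (F : {set E}) : rel V :=
  fun x y => [exists e in F, (ends e == (x, y)) || (ends e == (y, x))].

Definition conn_in (F : {set E}) (x y : V) : bool := connect (adj_in F) x y.

Definition graph_connected : Prop := forall x y : V, conn_in [set: E] x y.

(* F is acyclic (a forest): no edge of F lies on a cycle of (V, F), i.e. the
   endpoints of each e in F are not connected in F \ {e} (this also excludes loops). *)
Definition is_forest (F : {set E}) : bool :=
  [forall e in F, ~~ conn_in (F :\ e) (ends e).1 (ends e).2].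

Definition seg_forest (t : nat) (m : nat -> V) (F : {set E}) : bool :=
  [&& is_forest F,
      [forall v : V, [exists i : 'I_t, conn_in F v (m i)]] &
      [forall i : 'I_t, forall j : 'I_t, conn_in F (m i) (m j) ==> (i == j)]].

Definition nF (t : nat) (m : nat -> V) : nat := #|[set F : {set E} | seg_forest t m F]|.

End Graphs.

Section Gluing.
Variables (V1 E1 V2 E2 : finType) (ends1 : E1 -> V1 * V1) (ends2 : E2 -> V2 * V2).
Variables (t1 t2 g : nat) (m1 : nat -> V1) (m2 : nat -> V2).

Definition keep2 (v : V2) : bool := [forall i : 'I_g, m2 i != v].

(* vertex set of the gluing: V1 together with the non-identified vertices of V2
   (a concrete model of (V1 ⊔ V2) / (m1 i = m2 i, i < g)) *)
Definition glueV : finType := (V1 + {v : V2 | keep2 v})%type.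

Definition glue1 (v : V1) : glueV := inl v.

Definition glue2 (v : V2) : glueV :=
  match insub v with
  | Some w => inr w
  | None => inl (m1 (oapp (@nat_of_ord g) 0 [pick i : 'I_g | m2 i == v]))
  end.

Definition glueE : finType := (E1 + E2)%type.

Definition glue_ends (e : glueE) : glueV * glueV :=
  match e with
  | inl e1 => (glue1 (ends1 e1).1, glue1 (ends1 e1).2)
  | inr e2 => (glue2 (ends2 e2).1, glue2 (ends2 e2).2)
  end.

(* marked vertices of the gluing: images of m1 0..m1 (t1-1), then images of
   the non-identified marked vertices m2 g .. m2 (t2-1) *)
Definition glue_marks (i : nat) : glueV :=
  if i < t1 then glue1 (m1 i) else glue2 (m2 (i - t1 + g)).

End Gluing.

(* Main.v *)
Require Import Defs.
From mathcomp Require Import all_boot zify.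
Set Implicit Arguments. Unset Strict Implicit. Unset Printing Implicit Defensive.

Lemma connect_morph (T T' : finType) (e : rel T) (e' : rel T') (h : T -> T') :
  (forall x y, e x y -> connect e' (h x) (h y)) ->
  forall x y, connect e x y -> connect e' (h x) (h y).
Proof.
move=> H x y /connectP [p Hp ->]; elim: p x Hp => [|z p IH] x /=.
  by rewrite connect0.
by case/andP => exz Hp; exact: connect_trans (H _ _ exz) (IH _ Hp).
Qed.

Lemma adj_in_sym (V E : finType) (ends : E -> V * V) (F : {set E}) : symmetric (adj_in ends F).
Proof.
move=> x y; apply/existsP/existsP => [] [e /andP [eF H]]; exists e;
  by rewrite eF orbC.
Qed.

Lemma conn_in_sym (V E : finType) (ends : E -> V * V) (F : {set E}) x y :
  conn_in ends F x y = conn_in ends F y x.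
Proof. exact: (sym_connect_sym (adj_in_sym ends F)). Qed.

Lemma conn_in_trans (V E : finType) (ends : E -> V * V) (F : {set E}) x y z :
  conn_in ends F x y -> conn_in ends F y z -> conn_in ends F x z.
Proof. exact: connect_trans. Qed.

Lemma conn_in_refl (V E : finType) (ends : E -> V * V) (F : {set E}) x : conn_in ends F x x.
Proof. exact: connect0. Qed.

Lemma conn_in_edge (V E : finType) (ends : E -> V * V) (F : {set E}) e :
  e \in F -> conn_in ends F (ends e).1 (ends e).2.
Proof.
move=> eF; apply: connect1; apply/existsP; exists e; rewrite eF /=.
by case: (ends e) => a b /=; rewrite eqxx.
Qed.

Lemma adj_inP (V E : finType) (ends : E -> V * V) (F : {set E}) x y :
  adj_in ends F x y -> exists2 e, e \in F &
    ((ends e).1 = x /\ (ends e).2 = y) \/ ((ends e).1 = y /\ (ends e).2 = x).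
Proof.
case/existsP => e /andP [eF H]; exists e => //.
case: (ends e) H => a b /orP [] /eqP [-> ->]; by [left | right].
Qed.

Lemma conn_morph (V E V' : finType) (ends : E -> V * V) (F : {set E}) (e' : rel V') (h : V -> V') :
  connect_sym e' ->
  (forall e, e \in F -> connect e' (h (ends e).1) (h (ends e).2)) ->
  forall x y, conn_in ends F x y -> connect e' (h x) (h y).
Proof.
move=> sym H; apply: connect_morph => x y /adj_inP [e eF [[<- <-]|[<- <-]]].
  exact: H.
by rewrite sym; exact: H.
Qed.

Lemma conn_in_sub (V E : finType) (ends : E -> V * V) (G G' : {set E}) x y :
  G \subset G' -> conn_in ends G x y -> conn_in ends G' x y.
Proof.
move=> sGG'; apply: (@conn_morph V E V ends G _ id).
  exact: sym_connect_sym (adj_in_sym _ _).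
move=> e eG; apply: conn_in_edge; exact: (subsetP sGG').
Qed.

Section Glue.
Variables (V1 E1 V2 E2 : finType) (ends1 : E1 -> V1 * V1) (ends2 : E2 -> V2 * V2).
Variables (g : nat) (m1 : nat -> V1) (m2 : nat -> V2).
Hypothesis g12 : 1 <= g <= 2.
Hypothesis inj2 : forall i j, i < g -> j < g -> m2 i = m2 j -> i = j.

Local Notation VL := (glueV V1 g m2).
Local Notation EL := (glueE E1 E2).
Local Notation endsL := (glue_ends ends1 ends2 g m1 m2).
Local Notation gl1 := (glue1 g m2).
Local Notation gl2 := (glue2 g m1 m2).

Definition proj1 (F : {set EL}) : {set E1} := [set a | inl a \in F].
Definition proj2 (F : {set EL}) : {set E2} := [set b | inr b \in F].

Lemma glue2_m2 i : i < g -> gl2 (m2 i) = inl (m1 i).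
Proof.
move=> ig; rewrite /glue2 insubF; last first.
  apply/negbTE/negP => /forallP /(_ (Ordinal ig)) /=; by rewrite eqxx.
case: pickP => [j /eqP Hj | H] /=.
  by rewrite (inj2 (ltn_ord j) ig Hj).
by have := H (Ordinal ig); rewrite /= eqxx.
Qed.

Lemma glue2_inl v u : gl2 v = inl u -> exists2 i, i < g & v = m2 i /\ u = m1 i.
Proof.
rewrite /glue2; case: insubP => [w _ _ //|].
move=> /negP kv; case: pickP => [j /eqP Hj | H] /= [<-].
  by exists j => //.
exfalso; apply: kv; apply/forallP => j; apply/negP => /eqP Hj.
by have := H j; rewrite /= Hj eqxx.
Qed.

Lemma glue2_inr v w : gl2 v = inr w -> val w = v.
Proof.
rewrite /glue2; case: insubP => [w' _ <- [<-] //|].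
by case: pickP.
Qed.

Lemma glue2_val (w : {v : V2 | keep2 g m2 v}) : gl2 (val w) = inr w.
Proof. by rewrite /glue2 valK. Qed.

Lemma proj1D (F : {set EL}) a : proj1 (F :\ inl a) = proj1 F :\ a.
Proof. by apply/setP => x; rewrite !inE. Qed.
Lemma proj2D (F : {set EL}) a : proj2 (F :\ inl a) = proj2 F.
Proof. by apply/setP => x; rewrite !inE. Qed.
Lemma proj1D' (F : {set EL}) b : proj1 (F :\ inr b) = proj1 F.
Proof. by apply/setP => x; rewrite !inE. Qed.
Lemma proj2D' (F : {set EL}) b : proj2 (F :\ inr b) = proj2 F :\ b.
Proof. by apply/setP => x; rewrite !inE. Qed.

Variable F : {set EL}.
Local Notation C1 := (conn_in ends1 (proj1 F)).
Local Notation C2 := (conn_in ends2 (proj2 F)).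
Local Notation CL := (conn_in endsL F).

Lemma M1 x y : C1 x y -> CL (gl1 x) (gl1 y).
Proof.
apply: conn_morph; first exact: sym_connect_sym (adj_in_sym _ _).
move=> a; rewrite inE => aF.
exact: (conn_in_edge endsL aF).
Qed.

Lemma M2 x y : C2 x y -> CL (gl2 x) (gl2 y).
Proof.
apply: conn_morph; first exact: sym_connect_sym (adj_in_sym _ _).
move=> b; rewrite inE => bF.
exact: (conn_in_edge endsL bF).
Qed.

Definition r1 (u : VL) : V1 :=
  match u with inl v => v | inr w => m1 ((g == 2) && ~~ C2 (val w) (m2 0)) end.

Hypothesis sep2 : g = 2 -> ~~ C2 (m2 0) (m2 1).

Lemma r1_gl2 a : r1 (gl2 a) = m1 ((g == 2) && ~~ C2 a (m2 0)).
Proof.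
case E: (gl2 a) => [u|w] /=.
  case/glue2_inl: E => i ig [-> ->].
  have [g2|ng2] := eqVneq g 2; last by have -> : i = 0 by lia.
  move: ig; rewrite g2; case: i => [|[|//]] _ /=; first by rewrite conn_in_refl.
  by rewrite conn_in_sym sep2.
by rewrite (glue2_inr E).
Qed.

Lemma R1 u v : CL u v -> C1 (r1 u) (r1 v).
Proof.
apply: conn_morph; first exact: sym_connect_sym (adj_in_sym _ _).
case => [a|b] eF /=.
  by apply: conn_in_edge; rewrite inE.
rewrite !r1_gl2.
have e2 : C2 (ends2 b).1 (ends2 b).2 by apply: conn_in_edge; rewrite inE.
suff -> : C2 (ends2 b).1 (m2 0) = C2 (ends2 b).2 (m2 0) by exact: conn_in_refl.
apply/idP/idP => H.
  by apply: conn_in_trans H; rewrite conn_in_sym.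
exact: conn_in_trans e2 H.
Qed.

Definition r2 (u : VL) : V2 :=
  match u with inl v => m2 ((g == 2) && ~~ C1 v (m1 0)) | inr w => val w end.

Hypothesis sep1 : g = 2 -> ~~ C1 (m1 0) (m1 1).

Lemma r2_gl2 a : r2 (gl2 a) = a.
Proof.
case E: (gl2 a) => [u|w] /=; last by rewrite (glue2_inr E).
case/glue2_inl: E => i ig [-> ->].
have [g2|ng2] := eqVneq g 2; last by have -> : i = 0 by lia.
move: ig; rewrite g2; case: i => [|[|//]] _ /=; first by rewrite conn_in_refl.
by rewrite conn_in_sym sep1.
Qed.

Lemma R2 u v : CL u v -> C2 (r2 u) (r2 v).
Proof.
apply: conn_morph; first exact: sym_connect_sym (adj_in_sym _ _).
case => [a|b] eF /=; last first.
  by rewrite !r2_gl2; apply: conn_in_edge; rewrite inE.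
have e1 : C1 (ends1 a).1 (ends1 a).2 by apply: conn_in_edge; rewrite inE.
suff -> : C1 (ends1 a).1 (m1 0) = C1 (ends1 a).2 (m1 0) by exact: conn_in_refl.
apply/idP/idP => H.
  by apply: conn_in_trans H; rewrite conn_in_sym.
exact: conn_in_trans e1 H.
Qed.

End Glue.

Section Main.
Variables (V1 E1 V2 E2 : finType) (ends1 : E1 -> V1 * V1) (ends2 : E2 -> V2 * V2).
Variables (t1 t2 g : nat) (m1 : nat -> V1) (m2 : nat -> V2).
Hypothesis ht1 : 1 <= t1 <= 2.
Hypothesis ht2 : 1 <= t2 <= 2.
Hypothesis hg : 1 <= g <= minn t1 t2.
Hypothesis ht : 1 <= t1 + t2 - g <= 2.
Hypothesis inj2t : forall i j, i < t2 -> j < t2 -> m2 i = m2 j -> i = j.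

Let g12 : 1 <= g <= 2. Proof. lia. Qed.
Let inj2 : forall i j, i < g -> j < g -> m2 i = m2 j -> i = j.
Proof. move=> i j ig jg; apply: inj2t; lia. Qed.

Local Notation t := (t1 + t2 - g).
Local Notation M := (glue_marks t1 g m1 m2).
Local Notation endsL := (glue_ends ends1 ends2 g m1 m2).

Lemma M_lt k : k < t1 -> M k = inl (m1 k).
Proof. by rewrite /glue_marks => ->. Qed.
Lemma M_ge k : t1 <= k -> M k = glue2 g m1 m2 (m2 (k - t1 + g)).
Proof. by rewrite /glue_marks ltnNge => ->. Qed.

Definition phi j := if j < g then j else t1 + j - g.
Lemma M_phi j : M (phi j) = glue2 g m1 m2 (m2 j).
Proof.
rewrite /phi; case: ltnP => jg.
  rewrite M_lt ?(glue2_m2 m1 inj2 jg) //; lia.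
rewrite M_ge; last lia.
by have -> : t1 + j - g - t1 + g = j by lia.
Qed.
Lemma phi_lt j : j < t2 -> phi j < t.
Proof. move=> jt; rewrite /phi; case: (ltnP j g) => *; lia. Qed.
Lemma phi_inj i j : i < t2 -> j < t2 -> phi i = phi j -> i = j.
Proof. move=> it jt; rewrite /phi; case: (ltnP i g) => hi; case: (ltnP j g) => hj; lia. Qed.

Lemma idx_lt (b : bool) : (g == 2) && b < t2.
Proof. case: eqP => /= ?; [case: b => /=; lia | lia]. Qed.

Lemma seg_equiv F :
  seg_forest endsL t M F =
  seg_forest ends1 t1 m1 (proj1 F) && seg_forest ends2 t2 m2 (proj2 F).
Proof.
apply/idP/idP.
- case/and3P => forL covL sepL.
  have sepLn : forall i j, i < t -> j < t -> conn_in endsL F (M i) (M j) -> i = j.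
    move=> i j it jt H; move: (forallP sepL (Ordinal it)) => /forallP /(_ (Ordinal jt)).
    by rewrite H /= => /eqP [].
  have sep1 : forall i j, i < t1 -> j < t1 -> conn_in ends1 (proj1 F) (m1 i) (m1 j) -> i = j.
    move=> i j it jt /(M1 ends2 g m1 m2) H; apply: sepLn; [lia|lia|by rewrite !M_lt].
  have sep2 : forall i j, i < t2 -> j < t2 -> conn_in ends2 (proj2 F) (m2 i) (m2 j) -> i = j.
    move=> i j it jt /(M2 ends1 g m1 m2) H; apply: phi_inj => //.
    by apply: sepLn; [exact: phi_lt|exact: phi_lt| rewrite !M_phi].
  have s1 : g = 2 -> ~~ conn_in ends1 (proj1 F) (m1 0) (m1 1).
    move=> g2; apply/negP => H; suff: 0 = 1 by [].
    apply: (sep1 _ _ _ _ H); lia.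
  have s2 : g = 2 -> ~~ conn_in ends2 (proj2 F) (m2 0) (m2 1).
    move=> g2; apply/negP => H; suff: 0 = 1 by [].
    apply: (sep2 _ _ _ _ H); lia.
  apply/andP; split; apply/and3P; split.
  + apply/forallP => a; apply/implyP => aF; apply/negP => H.
    rewrite inE in aF; move: (forallP forL (inl a)); rewrite aF /= => /negP; apply.
    by apply: (M1 ends2 g m1 m2); rewrite proj1D.
  + apply/forallP => v; have /existsP [[k kt] Hk] := forallP covL (inl v).
    have := R1 g12 s2 Hk => /= H.
    case: (ltnP k t1) => kt1.
      by apply/existsP; exists (Ordinal kt1); rewrite M_lt in H.
    rewrite M_ge // (r1_gl2 m1 g12 s2) in H.
    have g1 : (g == 2) = false by apply/eqP; lia.
    rewrite g1 /= in H.
    have t10 : 0 < t1 by lia.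
    by apply/existsP; exists (Ordinal t10).
  + apply/forallP => i; apply/forallP => j; apply/implyP => H; apply/eqP; apply: val_inj.
    exact: sep1 (ltn_ord i) (ltn_ord j) H.
  + apply/forallP => b; apply/implyP => bF; apply/negP => H.
    rewrite inE in bF; move: (forallP forL (inr b)); rewrite bF /= => /negP; apply.
    by apply: (M2 ends1 g m1 m2); rewrite proj2D'.
  + apply/forallP => v; have /existsP [[k kt] Hk] := forallP covL (glue2 g m1 m2 v).
    have := R2 g12 s2 s1 Hk; rewrite (r2_gl2 g12 s2 s1) => H.
    case: (ltnP k t1) => kt1.
      rewrite M_lt //= in H.
      by apply/existsP; exists (Ordinal (idx_lt (~~ conn_in ends1 (proj1 F) (m1 k) (m1 0)))).
    rewrite M_ge // (r2_gl2 g12 s2 s1) in H.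
    have kk : k - t1 + g < t2 by lia.
    by apply/existsP; exists (Ordinal kk).
  + apply/forallP => i; apply/forallP => j; apply/implyP => H; apply/eqP; apply: val_inj.
    exact: sep2 (ltn_ord i) (ltn_ord j) H.
- case/andP => /and3P [for1 cov1 sep1b] /and3P [for2 cov2 sep2b].
  have sep1 : forall i j, i < t1 -> j < t1 -> conn_in ends1 (proj1 F) (m1 i) (m1 j) -> i = j.
    move=> i j it jt H; move: (forallP sep1b (Ordinal it)) => /forallP /(_ (Ordinal jt)).
    by rewrite H /= => /eqP [].
  have sep2 : forall i j, i < t2 -> j < t2 -> conn_in ends2 (proj2 F) (m2 i) (m2 j) -> i = j.
    move=> i j it jt H; move: (forallP sep2b (Ordinal it)) => /forallP /(_ (Ordinal jt)).
    by rewrite H /= => /eqP [].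
  have s1 : g = 2 -> ~~ conn_in ends1 (proj1 F) (m1 0) (m1 1).
    move=> g2; apply/negP => H; suff: 0 = 1 by [].
    apply: (sep1 _ _ _ _ H); lia.
  have s2 : g = 2 -> ~~ conn_in ends2 (proj2 F) (m2 0) (m2 1).
    move=> g2; apply/negP => H; suff: 0 = 1 by [].
    apply: (sep2 _ _ _ _ H); lia.
  apply/and3P; split.
  + apply/forallP => [[a|b]]; apply/implyP => eF; apply/negP => H.
    * have s2' : g = 2 -> ~~ conn_in ends2 (proj2 (F :\ inl a)) (m2 0) (m2 1).
        by rewrite proj2D.
      have := R1 g12 s2' H; rewrite /= proj1D.
      have aF : a \in proj1 F by rewrite inE.
      by move: (forallP for1 a); rewrite aF /= => /negP.
    * have sub2 : proj2 (F :\ inr b) \subset proj2 F.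
        by rewrite proj2D'; apply: subD1set.
      have s2' : g = 2 -> ~~ conn_in ends2 (proj2 (F :\ inr b)) (m2 0) (m2 1).
        move=> g2; apply/negP => /(conn_in_sub sub2); apply/negP; exact: s2.
      have s1' : g = 2 -> ~~ conn_in ends1 (proj1 (F :\ inr b)) (m1 0) (m1 1).
        by rewrite proj1D'.
      have := R2 g12 s2' s1' H; rewrite /= !(r2_gl2 g12 s2' s1') proj2D'.
      have bF : b \in proj2 F by rewrite inE.
      by move: (forallP for2 b); rewrite bF /= => /negP.
  + apply/forallP => [[v|w]].
    * have /existsP [[i it] Hi] := forallP cov1 v.
      have it' : i < t by lia.
      apply/existsP; exists (Ordinal it'); rewrite /= M_lt //.
      exact: (M1 ends2 g m1 m2 Hi).
    * have /existsP [[j jt] Hj] := forallP cov2 (val w).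
      apply/existsP; exists (Ordinal (phi_lt jt)); rewrite /= M_phi -(glue2_val m1 w).
      exact: (M2 ends1 g m1 m2 Hj).
  + apply/forallP => i; apply/forallP => j; apply/implyP => H; apply/eqP; apply: val_inj => /=.
    case: i j H => i it [j jt] /= H.
    case: (ltnP i t1) => ii; case: (ltnP j t1) => jj.
    * have := R1 g12 s2 H; rewrite !M_lt //= => H'; exact: sep1 ii jj H'.
    * have := R2 g12 s2 s1 H; rewrite M_lt // M_ge // (r2_gl2 g12 s2 s1) /=.
      have -> : (g == 2) = false by apply/eqP; lia.
      move=> H'; have := sep2 0 (j - t1 + g) ltac:(lia) ltac:(lia) H'; lia.
    * rewrite conn_in_sym in H.
      have := R2 g12 s2 s1 H; rewrite M_lt // M_ge // (r2_gl2 g12 s2 s1) /=.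
      have -> : (g == 2) = false by apply/eqP; lia.
      move=> H'; have := sep2 0 (i - t1 + g) ltac:(lia) ltac:(lia) H'; lia.
    * lia.
Qed.

End Main.

Definition join (E1 E2 : finType) (p : {set E1} * {set E2}) : {set glueE E1 E2} :=
  [set e | match e with inl a => a \in p.1 | inr b => b \in p.2 end].

Lemma join_inj (E1 E2 : finType) : injective (@join E1 E2).
Proof.
move=> [A1 A2] [B1 B2] E; congr pair; apply/setP => x.
  by have := congr1 (fun S : {set glueE E1 E2} => (inl x : glueE E1 E2) \in S) E; rewrite !inE.
by have := congr1 (fun S : {set glueE E1 E2} => (inr x : glueE E1 E2) \in S) E; rewrite !inE.
Qed.

Theorem proposition5p5
  (V1 E1 V2 E2 : finType) (ends1 : E1 -> V1 * V1) (ends2 : E2 -> V2 * V2)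
  (t1 t2 g : nat) (m1 : nat -> V1) (m2 : nat -> V2) :
  1 <= t1 <= 2 -> 1 <= t2 <= 2 ->
  1 <= g <= minn t1 t2 ->
  1 <= t1 + t2 - g <= 2 ->
  (forall i j, i < t1 -> j < t1 -> m1 i = m1 j -> i = j) ->
  (forall i j, i < t2 -> j < t2 -> m2 i = m2 j -> i = j) ->
  graph_connected ends1 -> graph_connected ends2 ->
  nF (glue_ends ends1 ends2 g m1 m2) (t1 + t2 - g) (glue_marks t1 g m1 m2)
  = nF ends1 t1 m1 * nF ends2 t2 m2.
Proof.
move=> ht1 ht2 hg ht _ inj2 _ _.
rewrite /nF -cardsX -(card_imset _ (@join_inj E1 E2)).
apply: eq_card => F; rewrite inE (seg_equiv ends1 ends2 m1 ht1 ht2 hg ht inj2).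
apply/idP/imsetP.
  move=> /andP [h1 h2]; exists (proj1 F, proj2 F); first by rewrite !inE /= h1 h2.
  by apply/setP => [[a|b]]; rewrite !inE.
case => [[G1 G2]]; rewrite !inE /= => /andP [h1 h2] ->.
have -> : proj1 (join (G1, G2)) = G1 by apply/setP => a; rewrite !inE.
have -> : proj2 (join (G1, G2)) = G2 by apply/setP => a; rewrite !inE.
by rewrite h1 h2.
Qed.
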